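(* Let $S\subset\mathcal P$ be finite and let $\Delta$ be a bounded region of $\mathcal L_S$ with $n$ sides, with $P_k$ and $D_k$ ($k\in\mathbb{Z}/n\mathbb{Z}$) as in the context. If $D_k=D_{k+1}$, then $\overleftrightarrow{P_kP_{k+1}}\cap S=\overline{P_kP_{k+1}}\cap S$ (the full line through $P_k,P_{k+1}$ meets $S$ only within the closed segment between them). If $D_k\neq D_{k+1}$, then $\overline{P_kP_{k+1}}\cap S=\{P_k,P_{k+1}\}$.
   Context: $\mathcal P=\mathbb{R}^2\setminus\{(0,0)\}$; for $P=(A,B)\in\mathcal P$, $L_P$ is the line $Ax+By=1$ in $\mathbb{R}^2$; $\mathcal L_S=\{L_P\mid P\in S\}$; $O$ is the origin. For finite $S$, the regions of $\mathcal L_S$ are the closures of the connected components of $\mathbb{R}^2\setminus\bigcup_{P\in S}L_P$. For a bounded region $\Delta$ with $n$ sides, $L_k$ ($k\in\mathbb{Z}/n\mathbb{Z}$) are the lines containing the sides of $\Delta$ in clockwise order around $\Delta$, $P_k\in S$ is the point with $L_{P_k}=L_k$, and $D_k\in\{l,r\}$ is the side (left or right) of $L_k$ on which $O$ lies for a traveller moving along the side of $\Delta$ on $L_k$ clockwise around $\Delta$ (with $\Delta$ on the traveller's right). $\overleftrightarrow{XY}$ denotes the line and $\overline{XY}$ the closed segment through $X,Y$. *)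

(* Defs.v *)
From HB Require Import structures.
From mathcomp Require Import all_boot all_order all_algebra.
From mathcomp Require Import all_classical all_reals all_analysis.
Set Implicit Arguments. Unset Strict Implicit. Unset Printing Implicit Defensive.
Import Order.TTheory GRing.Theory Num.Theory.
Import numFieldNormedType.Exports.
Local Open Scope classical_set_scope.
Local Open Scope ring_scope.

Section Defs.
Variable R : realType.
Notation pt := (R * R)%type.

Definition origin : pt := (0, 0).

Definition lineL (P : pt) : set pt := [set X | P.1 * X.1 + P.2 * X.2 = 1].

Definition arr_union (S : set pt) : set pt := \bigcup_(P in S) lineL P.

Definition is_region (S : set pt) (D : set pt) : Prop :=
  exists x, (~` arr_union S) x /\ D = @closure (R * R)%type (@connected_component (R * R)%type (~` arr_union S) x).

Definition bounded2 (D : set pt) : Prop :=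
  exists M : R, forall X, D X -> `|X.1| <= M /\ `|X.2| <= M.

Definition cross (u v : pt) : R := u.1 * v.2 - u.2 * v.1.
Definition psub (u v : pt) : pt := (u.1 - v.1, u.2 - v.2).

(* V : 'I_n -> pt lists the vertices of a convex polygon in clockwise order:
   every other vertex lies strictly to the right of each directed side V_k -> V_{k+1} *)
Definition clockwise_convex n (V : 'I_n -> pt) : Prop :=
  forall k j : 'I_n, j != k -> j != ordS k ->
    cross (psub (V (ordS k)) (V k)) (psub (V j) (V k)) < 0.

Definition polygon n (V : 'I_n -> pt) : set pt :=
  [set X | forall k : 'I_n, cross (psub (V (ordS k)) (V k)) (psub X (V k)) <= 0].

Definition line_through (U W : pt) : set pt :=
  [set X | exists t : R, X = (U.1 + t * (W.1 - U.1), U.2 + t * (W.2 - U.2))].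

Definition segment (U W : pt) : set pt :=
  [set X | exists2 t : R, 0 <= t <= 1 & X = (U.1 + t * (W.1 - U.1), U.2 + t * (W.2 - U.2))].

Inductive side := Left | Right.

(* D_k: the side (for a traveller going from V_k to V_{k+1}) on which O lies *)
Definition Dside n (V : 'I_n -> pt) (k : 'I_n) : side :=
  if 0 < cross (psub (V (ordS k)) (V k)) (psub origin (V k)) then Left else Right.

End Defs.

(* Main.v *)
From HB Require Import structures.
From mathcomp Require Import all_boot all_order all_algebra.
From mathcomp Require Import all_classical all_reals all_analysis.
From mathcomp Require Import zify ring lra.
Require Import Defs.
Import Order.TTheory GRing.Theory Num.Theory.
Local Open Scope ring_scope.
Import numFieldNormedType.Exports.
Local Open Scope classical_set_scope.
Lemma hcont (R : realType) (a b c : R) :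
  continuous (fun Y : R * R => c * (a * Y.1 + b * Y.2 - 1)).
Proof.
move=> x.
apply: cvgM; first exact: cvg_cst.
apply: cvgB; last exact: cvg_cst.
apply: cvgD; apply: cvgM; try exact: cvg_cst.
exact: cvg_fst. exact: cvg_snd.
Qed.

Lemma comp_side (R : realType) (S : set (R*R)) (Q : R*R) x : S Q -> (~` arr_union S) x ->
  closure (connected_component (~` arr_union S) x) `<=`
   [set Y | 0 <= (Q.1*x.1+Q.2*x.2-1) * (Q.1*Y.1+Q.2*Y.2-1)].
Proof.
move=> SQ Ax.
set A := ~` arr_union S. set C := connected_component A x.
set c := (Q.1*x.1+Q.2*x.2-1).
set h := fun Y : R * R => c * (Q.1*Y.1+Q.2*Y.2-1).
have gC : forall Y, C Y -> Q.1*Y.1+Q.2*Y.2-1 != 0.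
  move=> Y /connected_component_sub AY; apply/negP => /eqP e.
  apply: AY; exists Q => //; rewrite /lineL /=; apply/eqP; rewrite -subr_eq0; exact/eqP.
have Cx : C x by exact: connected_component_refl.
have c0 : c != 0 by exact: gC.
have clF : closed [set Y | 0 <= h Y].
  have -> : [set Y | 0 <= h Y] = ~` (h @^-1` [set z | z < 0]).
    apply/seteqP; split => Y /=.
    by move=> hY; apply/negP; rewrite -leNgt.
    by move=> /negP; rewrite -leNgt.
  rewrite closedC; apply: open_comp; last exact: open_lt.
  by move=> Y _; exact: hcont.
have CF : C `<=` [set Y | 0 < h Y].
  have := @component_connected _ A x.
  move=> /(_ (C `&` [set Y | 0 < h Y])) H.
  have e : C `&` [set Y | 0 < h Y] = C.
    apply: H.
    - exists x; split => //; rewrite /h /= lt_neqAle eq_sym mulf_neq0 //= -expr2; exact: sqr_ge0.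
    - exists (h @^-1` [set z | z > 0]) => //.
      apply: open_comp; last exact: open_gt.
      by move=> Y _; exact: hcont.
    - exists [set Y | 0 <= h Y] => //.
      apply/seteqP; split => Y /= [CY hY]; split => //.
        exact: ltW.
      rewrite lt_neqAle hY andbT eq_sym /h mulf_neq0 //; exact: gC.
  by move=> Y CY; rewrite -e in CY; case: CY.
move=> Y /(closureS (fun Z CZ => ltW (CF Z CZ))).
by rewrite -(closure_id _).1.
Qed.
Lemma ordS_neq n (i : 'I_n) : (3 <= n)%N -> ordS i != i /\ ordS (ordS i) != i.
Proof.
move=> n3; rewrite -!val_eqE /=; have := ltn_ord i.
rewrite leq_eqVlt => /orP [/eqP e|lt].
  rewrite e modnn ?mod0n ?modn_small; try lia; split; lia.
rewrite (modn_small lt); move: lt; rewrite leq_eqVlt => /orP [/eqP e|lt].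
  rewrite e modnn; split; lia.
rewrite (modn_small lt); split; lia.
Qed.
Lemma aff_id (R : realType) (p a b Y : R*R) : p.1*a.1+p.2*a.2 = 1 -> p.1*b.1+p.2*b.2 = 1 ->
 (p.1*Y.1+p.2*Y.2-1) * cross (psub b a) (psub (origin R) a) = - cross (psub b a) (psub Y a).
Proof.
move=> ha hb.
apply/eqP; rewrite -subr_eq0 opprK; apply/eqP.
set E0 := p.1*a.1+p.2*a.2 - 1. set E1 := p.1*b.1+p.2*b.2 - 1.
have -> : (p.1*Y.1+p.2*Y.2-1) * cross (psub b a) (psub (origin R) a) + cross (psub b a) (psub Y a)
  = E0 * (cross (psub b a) (psub (origin R) a)) - E0 * cross (psub b a) (psub Y a) + (E1 - E0) * ((Y.1 - a.1) * (- a.2) - (Y.2 - a.2) * (- a.1)).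
  rewrite /E0 /E1 /cross /psub /origin /=; ring.
rewrite /E0 /E1 ha hb subrr; ring.
Qed.

Lemma core (R : realType) (S D : set (R*R)) (p q a b e : R*R) (A B t : R) :
  p.1*a.1+p.2*a.2 = 1 -> p.1*b.1+p.2*b.2 = 1 -> q.1*b.1+q.2*b.2 = 1 -> q.1*e.1+q.2*e.2 = 1 ->
  A = p.1*e.1+p.2*e.2 - 1 -> B = q.1*a.1+q.2*a.2 - 1 ->
  (forall al be, 0 <= al -> 0 <= be -> al + be <= 1 ->
     D (b.1 + al*(a.1-b.1) + be*(e.1-b.1), b.2 + al*(a.2-b.2) + be*(e.2-b.2))) ->
  (forall Q, S Q -> exists2 gx : R, gx != 0 & forall Y, D Y -> 0 <= gx * (Q.1*Y.1+Q.2*Y.2-1)) ->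
  ((1-t)*A) * (t*B) < 0 ->
  ~ S (p.1 + t*(q.1-p.1), p.2 + t*(q.2-p.2)).
Proof.
move=> hpa hpb hqb hqe -> -> HD HS uv SQ.
have [gx gx0 HY] := HS _ SQ.
set u := (1-t)*(p.1*e.1+p.2*e.2 - 1) in uv.
set v := t*(q.1*a.1+q.2*a.2 - 1) in uv.
have gX : forall al be,
  (p.1 + t*(q.1-p.1)) * (b.1 + al*(a.1-b.1) + be*(e.1-b.1))
  + (p.2 + t*(q.2-p.2)) * (b.2 + al*(a.2-b.2) + be*(e.2-b.2)) - 1 = be*u + al*v.
  move=> al be; apply/eqP; rewrite -subr_eq0; apply/eqP.
  transitivity ((1-t)*((1-al-be)*(p.1*b.1+p.2*b.2-1) + al*(p.1*a.1+p.2*a.2-1))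
     + t*((1-al-be)*(q.1*b.1+q.2*b.2-1) + be*(q.1*e.1+q.2*e.2-1))).
    rewrite /u /v; ring.
  rewrite hpa hpb hqb hqe subrr; ring.
have u0 : u != 0 by apply: contraTneq uv => ->; rewrite mul0r ltxx.
have v0 : v != 0 by apply: contraTneq uv => ->; rewrite mulr0 ltxx.
set U := `|u|. set V := `|v|.
have U0 : 0 < U by rewrite normr_gt0.
have V0 : 0 < V by rewrite normr_gt0.
have UV : U * V = - (u * v) by rewrite -normrM ltr0_norm.
have U2 : U ^+ 2 = u ^+ 2 by rewrite real_normK // num_real.
have V2 : V ^+ 2 = v ^+ 2 by rewrite real_normK // num_real.
set c := (3*(U+V)+1)^-1.
have hc0 : 0 < c by rewrite invr_gt0; lra.
have hc : c * (3*(U+V)+1) = 1 by rewrite mulVf //; apply: lt0r_neq0; lra.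
have cU : 0 <= c * U by apply: mulr_ge0; lra.
have cV : 0 <= c * V by apply: mulr_ge0; lra.
have D1 := HD (2*U*c) (V*c).
have D2 := HD (U*c) (2*V*c).
have H1 := HY _ (D1 ltac:(nra) ltac:(nra) ltac:(nra)).
have H2 := HY _ (D2 ltac:(nra) ltac:(nra) ltac:(nra)).
rewrite gX in H1; rewrite gX in H2.
have g12 : (V*c*u + 2*U*c*v) * (2*V*c*u + U*c*v) < 0.
  have -> : (V*c*u + 2*U*c*v) * (2*V*c*u + U*c*v) =
     c^+2 * (2*(V^+2)*(u^+2) + 5*((U*V)*(u*v)) + 2*(U^+2)*(v^+2)) by ring.
  rewrite UV U2 V2.
  have -> : c ^+ 2 * (2 * v ^+ 2 * u ^+ 2 + 5 * (- (u * v) * (u * v)) + 2 * u ^+ 2 * v ^+ 2)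
     = - (c ^+ 2 * (u * v) ^+ 2) by ring.
  rewrite oppr_lt0; apply: mulr_gt0; first exact: exprn_gt0.
  by rewrite lt_neqAle eq_sym sqrf_eq0 mulf_neq0 // sqr_ge0.
have : 0 <= (gx * (V * c * u + 2 * U * c * v)) * (gx * (2 * V * c * u + U * c * v)).
  exact: mulr_ge0.
have -> : (gx * (V * c * u + 2 * U * c * v)) * (gx * (2 * V * c * u + U * c * v))
   = gx ^+ 2 * ((V*c*u + 2*U*c*v) * (2*V*c*u + U*c*v)) by ring.
rewrite pmulr_rge0; first by rewrite leNgt g12.
by rewrite lt_neqAle eq_sym sqrf_eq0 gx0 sqr_ge0.
Qed.

Lemma sgn_eq (R : realType) (x y : R) : 0 < x * y -> (0 < x) = (0 < y) /\ x != 0.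
Proof.
move=> h; have x0 : x != 0 by apply: contraTneq h => ->; rewrite mul0r ltxx.
have y0 : y != 0 by apply: contraTneq h => ->; rewrite mulr0 ltxx.
split => //; apply/idP/idP => hx.
  by rewrite -(pmulr_rgt0 _ hx).
by rewrite -(pmulr_lgt0 _ hx).
Qed.

Lemma pt0 (R : realType) (U W : R*R) : U = (U.1 + 0*(W.1-U.1), U.2 + 0*(W.2-U.2)).
Proof. by rewrite !mul0r !addr0; case: U. Qed.
Lemma pt1 (R : realType) (U W : R*R) : W = (U.1 + 1*(W.1-U.1), U.2 + 1*(W.2-U.2)).
Proof. by rewrite !mul1r !(addrC U.1) !(addrC U.2) !subrK; case: W. Qed.

Lemma cr_le0 (R : realType) n (V : 'I_n -> (R*R)%type) j i :
  clockwise_convex V -> cross (psub (V (ordS j)) (V j)) (psub (V i) (V j)) <= 0.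
Proof.
move=> cc; have [->|ij] := eqVneq i j.
  by rewrite /cross /psub !subrr !mulr0 subrr.
have [->|ij1] := eqVneq i (ordS j).
  by rewrite /cross /psub /= [X in _ - X]mulrC subrr.
exact/ltW/cc.
Qed.

Lemma poly_in (R : realType) n (V : 'I_n -> (R*R)%type) (a b e : 'I_n) al be :
  clockwise_convex V -> 0 <= al -> 0 <= be -> al + be <= 1 ->
  polygon V ((V b).1 + al*((V a).1-(V b).1) + be*((V e).1-(V b).1),
             (V b).2 + al*((V a).2-(V b).2) + be*((V e).2-(V b).2)).
Proof.
move=> cc al0 be0 s1 j.
have ha := @cr_le0 _ _ V j a cc. have hb := @cr_le0 _ _ V j b cc. have he := @cr_le0 _ _ V j e cc.
set ca := cross _ (psub (V a) _) in ha.
set cb := cross _ (psub (V b) _) in hb.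
set ce := cross _ (psub (V e) _) in he.
have -> : cross (psub (V (ordS j)) (V j))
    (psub ((V b).1 + al*((V a).1-(V b).1) + be*((V e).1-(V b).1),
           (V b).2 + al*((V a).2-(V b).2) + be*((V e).2-(V b).2)) (V j))
   = (1 - al - be) * cb + al * ca + be * ce.
  rewrite /ca /cb /ce /cross /psub /=; ring.
nra.
Qed.

Theorem lemma3p9 (R : realType) (S : set (R * R)%type)
  (Delta : set (R * R)%type) (n : nat) (V : 'I_n -> (R * R)%type)
  (P : 'I_n -> (R * R)%type) :
  finite_set S ->
  S `<=` [set X | X != origin R] ->
  is_region S Delta -> bounded2 Delta ->
  (3 <= n)%N ->
  clockwise_convex V -> Delta = polygon V ->
  (forall k : 'I_n, S (P k) /\ lineL (P k) = line_through (V k) (V (ordS k))) ->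
  forall k : 'I_n,
    (Dside V k = Dside V (ordS k) ->
       line_through (P k) (P (ordS k)) `&` S = segment (P k) (P (ordS k)) `&` S) /\
    (Dside V k <> Dside V (ordS k) ->
       segment (P k) (P (ordS k)) `&` S = [set P k; P (ordS k)]).
Proof.
move=> _ _ [x [Ax DE]] _ n3 cc DP HP k.
have [kk1 kk2] := @ordS_neq _ k n3.
have [k1k2 _] := @ordS_neq _ (ordS k) n3.
have [Sp Lp] := HP k. have [Sq Lq] := HP (ordS k).
have hpa : (P k).1 * (V k).1 + (P k).2 * (V k).2 = 1.
  have : lineL (P k) (V k) by rewrite Lp; exists 0; exact: pt0.
  by [].
have hpb : (P k).1 * (V (ordS k)).1 + (P k).2 * (V (ordS k)).2 = 1.
  have : lineL (P k) (V (ordS k)) by rewrite Lp; exists 1; exact: pt1.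
  by [].
have hqb : (P (ordS k)).1 * (V (ordS k)).1 + (P (ordS k)).2 * (V (ordS k)).2 = 1.
  have : lineL (P (ordS k)) (V (ordS k)) by rewrite Lq; exists 0; exact: pt0.
  by [].
have hqe : (P (ordS k)).1 * (V (ordS (ordS k))).1 + (P (ordS k)).2 * (V (ordS (ordS k))).2 = 1.
  have : lineL (P (ordS k)) (V (ordS (ordS k))) by rewrite Lq; exists 1; exact: pt1.
  by [].
set A := (P k).1 * (V (ordS (ordS k))).1 + (P k).2 * (V (ordS (ordS k))).2 - 1.
set B := (P (ordS k)).1 * (V k).1 + (P (ordS k)).2 * (V k).2 - 1.
have HD : forall al be, 0 <= al -> 0 <= be -> al + be <= 1 ->
   Delta ((V (ordS k)).1 + al*((V k).1-(V (ordS k)).1) + be*((V (ordS (ordS k))).1-(V (ordS k)).1),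
          (V (ordS k)).2 + al*((V k).2-(V (ordS k)).2) + be*((V (ordS (ordS k))).2-(V (ordS k)).2)).
  by move=> al be ? ? ?; rewrite DP; exact: poly_in.
have HS : forall Q, S Q -> exists2 gx : R, gx != 0 &
    forall Y, Delta Y -> 0 <= gx * (Q.1*Y.1+Q.2*Y.2-1).
  move=> Q SQ; exists (Q.1*x.1+Q.2*x.2-1).
    apply/negP => /eqP e; apply: Ax; exists Q => //.
    by rewrite /lineL /=; apply/eqP; rewrite -subr_eq0; exact/eqP.
  by move=> Y; rewrite DE => /(@comp_side _ S Q x SQ Ax).
have cor := fun t => @core _ S Delta _ _ _ _ _ A B t hpa hpb hqb hqe erefl erefl HD HS.
have sA : A * cross (psub (V (ordS k)) (V k)) (psub (origin R) (V k)) > 0.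
  rewrite aff_id // oppr_gt0; apply: cc => //.
have sB : B * cross (psub (V (ordS (ordS k))) (V (ordS k))) (psub (origin R) (V (ordS k))) > 0.
  rewrite aff_id // oppr_gt0; apply: cc => //; by rewrite eq_sym.
have hAB : (Dside V k = Dside V (ordS k) -> 0 < A * B) /\
           (Dside V k <> Dside V (ordS k) -> A * B < 0).
  have [eA nA] := @sgn_eq _ _ _ sA. have [eB nB] := @sgn_eq _ _ _ sB.
  rewrite /Dside -eA -eB.
  case/orP: (lt_total nA) => hA; case/orP: (lt_total nB) => hB;
    rewrite ?(lt_gtF hA) ?(lt_gtF hB) ?hA ?hB; split => // E; try by exfalso; apply: E.
  1-4: nra.
case: hAB => hE hN; split.
- move=> /hE AB; apply/seteqP; split => X [HX SX]; split => //.
  case: HX => t Xt; exists t => //; subst X.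
  apply/andP; split; rewrite leNgt; apply/negP => ht; apply: (cor t _ SX).
    have -> : (1 - t) * A * (t * B) = (t * (1 - t)) * (A * B) by ring.
    by rewrite pmulr_llt0 //; nra.
  have -> : (1 - t) * A * (t * B) = (t * (1 - t)) * (A * B) by ring.
  by rewrite pmulr_llt0 //; nra.
  by case: HX => t _ ->; exists t.
- move=> /hN AB; apply/seteqP; split.
    move=> X [[t /andP[t0 t1] ->] SX].
    have [e0|tn0] := eqVneq t 0; first by left; rewrite e0 -pt0.
    have [e1|tn1] := eqVneq t 1; first by right; rewrite e1 -pt1.
    exfalso; apply: (cor t _ SX).
    have -> : (1 - t) * A * (t * B) = (t * (1 - t)) * (A * B) by ring.
    rewrite pmulr_rlt0 //; apply: mulr_gt0.
      by rewrite lt_neqAle eq_sym tn0.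
    by rewrite subr_gt0 lt_neqAle tn1.
  move=> X [->|->]; split => //.
    by exists 0; [rewrite lexx ler01 | exact: pt0].
  by exists 1; [rewrite lexx ler01 | exact: pt1].
Qed.
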